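(* Let $G$ be a finite simple graph with $n$ vertices and minimum degree $\delta \ge 24{,}000$. Then $$\gamma_s(G) \le \frac{\sqrt{6.8\ln(\delta+1)} + 0.32}{\sqrt{\delta+1}}\, n.$$
   Context: For a vertex $v$ of $G$, $N[v]$ denotes the closed neighbourhood of $v$ (i.e. $v$ together with its neighbours). A signed domination function of $G$ is a function $f: V(G) \to \{-1, 1\}$ such that $\sum_{x \in N[v]} f(x) \ge 1$ for every vertex $v \in V(G)$. The weight of $f$ is $f(V(G)) = \sum_{v \in V(G)} f(v)$. The signed domination number $\gamma_s(G)$ is the minimum weight of a signed domination function of $G$. *)

(* Defs.v *)
From mathcomp Require Import all_boot all_order all_algebra.
From mathcomp Require Import all_classical all_reals all_analysis.
Set Implicit Arguments. Unset Strict Implicit. Unset Printing Implicit Defensive.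
Import Order.TTheory GRing.Theory Num.Theory.
Local Open Scope ring_scope.

Definition simple_graph (V : finType) (e : rel V) : Prop :=
  symmetric e /\ irreflexive e.

Definition cnbhd (V : finType) (e : rel V) (v : V) : {set V} :=
  v |: [set u | e v u].

Definition deg (V : finType) (e : rel V) (v : V) : nat := #|[set u | e v u]|.

(* A function V -> {-1,1} is encoded as g : {ffun V -> bool}; true |-> 1, false |-> -1. *)
Definition sval (V : finType) (g : {ffun V -> bool}) (x : V) : int :=
  if g x then 1 else -1.

Definition signed_dom (V : finType) (e : rel V) (g : {ffun V -> bool}) : bool :=
  [forall v, 1 <= \sum_(x in cnbhd e v) sval g x].

Definition sweight (V : finType) (g : {ffun V -> bool}) : int :=
  \sum_(x : V) sval g x.

(* signed domination number: minimum weight over all signed domination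
   functions (the all-ones function is one, of weight #|V|, used as seed). *)
Definition gamma_s (V : finType) (e : rel V) : int :=
  \big[Order.min/(#|V|%:Z)]_(g : {ffun V -> bool} | signed_dom e g) sweight g.

(* Main.v *)
Require Import Defs.
From mathcomp Require Import all_boot all_order all_algebra.
From mathcomp Require Import all_classical all_reals all_analysis.
From mathcomp Require Import zify ring lra.
Import Order.TTheory GRing.Theory Num.Theory.
Local Open Scope ring_scope.
Set Implicit Arguments. Unset Strict Implicit.

Section Comb.
Variables (V : finType) (e : rel V).
Hypothesis He : simple_graph e.

Definition negs (g : {ffun V -> bool}) v := #|[set y in cnbhd e v | ~~ g y]|.
Definition exc (g : {ffun V -> bool}) v := (negs g v - (deg e v)./2)%N.

Lemma card_cnbhd v : #|cnbhd e v| = (deg e v).+1.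
Proof.
rewrite /cnbhd cardsU1 inE.
by have -> : e v v = false by apply: He.2.
Qed.

Lemma sum_sval (A : {set V}) (g : {ffun V -> bool}) :
  \sum_(x in A) Defs.sval g x = #|A|%:Z - 2 * #|[set y in A | ~~ g y]|%:Z.
Proof.
have -> : \sum_(x in A) Defs.sval g x = \sum_(x in A) (1 - 2 * (~~ g x : nat)%:Z).
  by apply: eq_bigr => x _; rewrite /Defs.sval; case: (g x).
rewrite big_split /= sumr_const sumrN -mulr_sumr.
congr (_ - 2 * _); first by rewrite natz.
rewrite (eq_bigr (fun x => if ~~ g x then 1 else 0)); last by move=> x _; case: (g x).
rewrite -big_mkcondr /=.
rewrite (eq_bigl (fun x => x \in [set y in A | ~~ g y])); last by move=> x; rewrite inE.
by rewrite sumr_const natz.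
Qed.


Lemma dom_of_exc g : (forall v, exc g v = 0%N) -> signed_dom e g.
Proof.
move=> H; apply/forallP => v; rewrite sum_sval card_cnbhd.
have := H v; rewrite /exc /negs => /eqP; rewrite subn_eq0 => Hle.
have := odd_double_half (deg e v); rewrite -mul2n.
move: Hle; set a := #|_|; set d := deg e v; set h := d./2.
move=> *; lia.
Qed.

Lemma sweight_flip (g : {ffun V -> bool}) y : g y = false ->
  sweight [ffun z => if z == y then true else g z] = sweight g + 2.
Proof.
move=> gy; rewrite /sweight (bigD1 y) //= [in RHS](bigD1 y) //=.
rewrite /Defs.sval ffunE eqxx gy.
rewrite (eq_bigr (fun x => Defs.sval g x)); last first.
  by move=> x /negbTE xy; rewrite /Defs.sval ffunE xy.
rewrite /Defs.sval; lia.
Qed.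

Lemma negs_flip (g : {ffun V -> bool}) y v :
  (negs [ffun z => if z == y then true else g z] v <= negs g v)%N.
Proof.
rewrite /negs; apply: subset_leq_card; apply/fintype.subsetP => x; rewrite !inE ffunE.
by case: (x == y); rewrite ?andbF.
Qed.

Lemma negs_flip_lt (g : {ffun V -> bool}) y v : y \in cnbhd e v -> g y = false ->
  (negs [ffun z => if z == y then true else g z] v < negs g v)%N.
Proof.
move=> yN gy; rewrite /negs; apply: proper_card; rewrite finset.properEneq; apply/andP; split.
  apply/negP => /eqP E.
  have : y \in [set y0 in cnbhd e v | ~~ g y0] by rewrite inE yN gy.
  by rewrite -E inE ffunE eqxx andbF.
apply/fintype.subsetP => x; rewrite !inE ffunE.
by case: (x == y); rewrite ?andbF.
Qed.

Lemma fix_exc n : forall g : {ffun V -> bool}, (\sum_v exc g v <= n)%N ->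
  exists g', signed_dom e g' /\ sweight g' <= sweight g + 2 * (\sum_v exc g v)%:Z.
Proof.
elim: n => [|n IH] g Hs.
  exists g; split; last by rewrite ler_wpDr.
  apply: dom_of_exc => v; apply/eqP; rewrite -leqn0.
  by apply: leq_trans Hs; rewrite (bigD1 v) //= leq_addr.
case: (boolP [exists v, exc g v != 0%N]); last first.
  rewrite negb_exists => /forallP H; exists g; split; last by rewrite ler_wpDr.
  by apply: dom_of_exc => v; apply/eqP; have := H v; rewrite negbK.
case/existsP => v Hv.
have : [set y in cnbhd e v | ~~ g y] != finset.set0.
  apply/eqP => E; move: Hv; rewrite /exc /negs E finset.cards0.
  by rewrite sub0n.
case/finset.set0Pn => y; rewrite inE => /andP [yN /negbTE gy].
set g1 := [ffun z => if z == y then true else g z].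
have Hlt : (\sum_u exc g1 u < \sum_u exc g u)%N.
  rewrite (bigD1 v) //= [X in (_ < X)%N](bigD1 v) //=.
  rewrite -addSn; apply: leq_add.
    have := @negs_flip_lt g y v yN gy; move: Hv; rewrite /exc.
    set a := negs g1 v; set b := negs g v; set h := (deg e v)./2 => *; lia.
  apply: leq_sum => u _; rewrite /exc; have := negs_flip g y u.
  set a := negs g1 u; set b := negs g u; set h := (deg e u)./2 => *; lia.
have Hs1 : (\sum_u exc g1 u <= n)%N by rewrite -ltnS; apply: leq_trans Hlt Hs.
have [g' [Hd Hw]] := IH g1 Hs1.
exists g'; split => //; apply: (le_trans Hw).
rewrite /g1 sweight_flip // -!addrA lerD2l.
move: Hlt; set a := (\sum_u _)%N; set b := (\sum_u _)%N => *; lia.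
Qed.
End Comb.

Section Prob.
Variables (R : realType) (V : finType).

Lemma sumprod (F : V -> bool -> R) :
  \sum_(g : {ffun V -> bool}) \prod_i F i (g i) = \prod_i (F i true + F i false).
Proof. by rewrite -bigA_distr_bigA; apply: eq_bigr => i _; rewrite big_bool. Qed.

Definition W (p : R) (g : {ffun V -> bool}) : R := \prod_i (if g i then 1 - p else p).

Lemma W_ge0 p g : 0 <= p <= 1 -> 0 <= W p g.
Proof.
move=> /andP [p0 p1]; apply: prodr_ge0 => i _; case: (g i) => //; lra.
Qed.

Lemma sumW p : \sum_g W p g = 1.
Proof.
rewrite /W (sumprod (fun i b => if b then 1 - p else p)).
by apply: big1 => i _; rewrite subrK.
Qed.

Lemma prod_single (x : V) (h : bool -> R) (g : {ffun V -> bool}) :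
  \prod_i (if i == x then h (g i) else 1) = h (g x).
Proof.
rewrite (bigD1 x) //= eqxx big1 ?mulr1 // => i /negbTE ->; done.
Qed.

Lemma EW_sval p x : \sum_g W p g * (Defs.sval g x)%:~R = 1 - 2 * p.
Proof.
have E : forall g : {ffun V -> bool}, W p g * (Defs.sval g x)%:~R =
   \prod_i ((if g i then 1 - p else p) *
           (if i == x then (if g i then 1 else -1) else 1)).
  move=> g; rewrite big_split /= (prod_single x (fun b : bool => if b then (1:R) else -1)) /W /Defs.sval.
  by case: (g x) => //=; rewrite ?mulrN1z ?mulr1z.
rewrite (eq_bigr _ (fun g _ => E g)).
rewrite (sumprod (fun i b => (if b then 1 - p else p) *
           (if i == x then (if b then 1 else -1) else 1))).
rewrite (bigD1 x) //= eqxx big1 ?mulr1; first lra.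
by move=> i /negbTE ->; rewrite !mulr1 subrK.
Qed.


Lemma EW_sweight p : \sum_g W p g * (sweight g)%:~R = #|V|%:R * (1 - 2 * p).
Proof.
under eq_bigr => g _ do rewrite /sweight rmorph_sum mulr_sumr.
rewrite exchange_big /=.
under eq_bigr => x _ do rewrite EW_sval.
rewrite sumr_const; symmetry; etransitivity; first exact: mulr_natl. by apply: congr1; apply: eq_card.
Qed.

Variable (e : rel V).
Hypothesis He : simple_graph e.

Lemma EW_q p q v : \sum_g W p g * q ^+ negs e g v = (1 - p + p * q) ^+ (deg e v).+1.
Proof.
have E : forall g : {ffun V -> bool}, W p g * q ^+ negs e g v =
   \prod_i ((if g i then 1 - p else p) *
           (if (i \in cnbhd e v) && ~~ g i then q else 1)).
  move=> g; rewrite big_split /=; congr (_ * _).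
  rewrite -big_mkcond /=.
  rewrite (eq_bigl (fun i => i \in [set y in cnbhd e v | ~~ g y])); last first.
    by move=> i; rewrite inE.
  by rewrite prodr_const.
rewrite (eq_bigr _ (fun g _ => E g)).
rewrite (sumprod (fun i b => (if b then 1 - p else p) *
           (if (i \in cnbhd e v) && ~~ b then q else 1))).
rewrite (eq_bigr (fun i => if i \in cnbhd e v then 1 - p + p * q else 1)); last first.
  by move=> i _; case: (i \in cnbhd e v) => /=; rewrite ?mulr1 // subrK.
by rewrite -big_mkcond /= prodr_const card_cnbhd.
Qed.

Lemma bernoulli (q : R) m : 1 <= q -> 1 + m%:R * (q - 1) <= q ^+ m.
Proof.
move=> q1; elim: m => [|m IH]; first by rewrite mul0r addr0 expr0.
rewrite exprS.
have h0 : 0 <= m%:R * (q - 1) by apply: mulr_ge0 => //; lra.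
have : (1 + m%:R * (q - 1)) * q <= q ^+ m * q by apply: ler_wpM2r => //; lra.
move=> H; rewrite [q * _]mulrC; apply: le_trans H.
rewrite -natr1; set M := (m%:R : R).
have M0 : 0 <= M by rewrite /M ler0n.
have : 0 <= M * (q - 1) * (q - 1) by apply: mulr_ge0 => //; lra.
nra.
Qed.

Lemma exc_bound (q : R) g v : 1 < q ->
  (exc e g v)%:R <= q ^+ negs e g v / ((q - 1) * q ^+ (deg e v)./2).
Proof.
move=> q1; rewrite /exc.
set a := (deg e v)./2; set k := negs e g v.
have qa : 0 < q ^+ a by apply: exprn_gt0; lra.
have K : 0 < (q - 1) * q ^+ a by apply: mulr_gt0 => //; lra.
case: (leqP k a) => ka.
  have -> : (k - a)%N = 0%N by apply/eqP; rewrite subn_eq0.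
  rewrite mulr0n; apply: divr_ge0; [apply: exprn_ge0; lra | exact: ltW].
have -> : k = (a + (k - a))%N by lia.
set m := (k - a)%N; rewrite addKn exprD ler_pdivlMr //.
have := bernoulli m (ltW q1).
rewrite [(q - 1) * _]mulrC mulrA; nra.
Qed.

Lemma EW_exc p q v : 0 <= p <= 1 -> 1 < q ->
  \sum_g W p g * (exc e g v)%:R <=
  (1 - p + p * q) ^+ (deg e v).+1 / ((q - 1) * q ^+ (deg e v)./2).
Proof.
move=> hp q1; rewrite -EW_q mulr_suml; apply: ler_sum => g _.
by rewrite -mulrA; apply: ler_wpM2l; [exact: W_ge0 | exact: exc_bound].
Qed.


Lemma gamma_le_g (g : {ffun V -> bool}) :
  (gamma_s e)%:~R <= (sweight g)%:~R + 2 * \sum_v ((exc e g v)%:R : R).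
Proof.
have [g' [Hd Hw]] := fix_exc He (leqnn (\sum_v exc e g v)) .
have H1 : gamma_s e <= sweight g' by apply: bigmin_le_cond.
have H2 : gamma_s e <= sweight g + 2 * (\sum_v exc e g v)%:Z := le_trans H1 Hw.
have := H2; rewrite -(ler_int R) => H3; apply: le_trans H3 _.
rewrite rmorphD rmorphM /= sumMz.
by [].
Qed.

Lemma gamma_bound p q : 0 <= p <= 1 -> 1 < q ->
  ((gamma_s e)%:~R : R) <= #|V|%:R * (1 - 2 * p) +
    2 * \sum_v ((1 - p + p * q) ^+ (deg e v).+1 / ((q - 1) * q ^+ (deg e v)./2)).
Proof.
move=> hp q1.
have -> : (gamma_s e)%:~R = \sum_g W p g * (gamma_s e)%:~R :> R.
  by rewrite -mulr_suml sumW mul1r.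
apply: (@le_trans _ _ (\sum_g W p g * (((sweight g)%:~R : R) + 2 * \sum_v ((exc e g v)%:R : R)))).
  apply: ler_sum => g _; apply: ler_wpM2l; [exact: W_ge0 | exact: gamma_le_g].
under eq_bigr => g _ do rewrite mulrDr mulrCA mulr_sumr.
rewrite big_split /= EW_sweight lerD2l -mulr_sumr.
rewrite ler_pM2l ?ltr0n //.
rewrite exchange_big /=; apply: ler_sum => v _.
exact: EW_exc.
Qed.

End Prob.

Unset Implicit Arguments.

Section Anal.
Variable R : realType.

Lemma tail (x : R) (d : nat) (p q : R) : 0 < x < 1 ->
  p = (1 - x) / 2 -> q = (1 + x) / (1 - x) ->
  (1 - p + p * q) ^+ d.+1 / ((q - 1) * q ^+ d./2) <=
  (1 + x) ^+ 2 * (1 - x ^+ 2) ^+ d./2 / (2 * x).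
Proof.
move=> /andP [x0 x1] hp hq.
have nx : 1 - x != 0 by rewrite subr_eq0; apply/eqP; lra.
have e1 : 1 - p + p * q = 1 + x by rewrite hp hq; field.
have e2 : q - 1 = 2 * x / (1 - x) by rewrite hq; field.
set a := d./2.
have ha : (a <= d.+1)%N by have := odd_double_half d; rewrite -/a -mul2n; lia.
have hb : (d.+1 - a <= a + 2)%N.
  by have := odd_double_half d; rewrite -/a -mul2n; case: (odd d) => /= ?; lia.
rewrite e1 e2 hq expr_div_n.
have -> : (1 + x) ^+ d.+1 = (1 + x) ^+ (d.+1 - a) * (1 + x) ^+ a.
  by rewrite -exprD subnK.
have p1 : 0 < (1 + x) ^+ a by apply: exprn_gt0; lra.
have p2 : 0 < (1 - x) ^+ a by apply: exprn_gt0; lra.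
have -> : (1 + x) ^+ (d.+1 - a) * (1 + x) ^+ a /
    (2 * x / (1 - x) * ((1 + x) ^+ a / (1 - x) ^+ a)) =
    (1 + x) ^+ (d.+1 - a) * ((1 - x) * (1 - x) ^+ a) / (2 * x).
  by field; rewrite nx !gt_eqF //; lra.
rewrite ler_pdivrMr ?mulr_gt0 // divfK; last by apply/eqP; lra.
have h1 : (1 + x) ^+ (d.+1 - a) <= (1 + x) ^+ (a + 2).
  by apply: ler_weXn2l => //; lra.
have h2 : (1 - x) * (1 - x) ^+ a <= (1 - x) ^+ a.
  by rewrite ler_piMl //; [apply: ltW | lra].
have -> : (1 + x) ^+ 2 * (1 - x ^+ 2) ^+ a = (1 + x) ^+ (a + 2) * (1 - x) ^+ a.
  by rewrite exprD (_ : 1 - x ^+ 2 = (1 + x) * (1 - x)) ?exprMn; [ring | ring].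
apply: le_trans (_ : (1 + x) ^+ (a + 2) * ((1 - x) * (1 - x) ^+ a) <= _).
  apply: ler_wpM2r => //; apply: mulr_ge0; [lra | exact: ltW].
apply: ler_wpM2l => //; apply: exprn_ge0; lra.
Qed.


Lemma vertex_bound (D s t x : R) (a : nat) :
  200 <= D -> s ^+ 2 = 68 / 10 * ln D -> 0 <= s -> t ^+ 2 = D -> 0 <= t ->
  x = s / t -> D - 2 <= 2 * a%:R ->
  [/\ 0 < x, x < 1 &
  (1 + x) ^+ 2 * (1 - x ^+ 2) ^+ a / (2 * x) <= 16 / 100 / t].
Proof.
move=> hD hs s0 ht t0 hx ha.
set L := ln D in hs *.
have D0 : 0 < D by lra.
have eL : expR L = D by rewrite /L lnK // posrE.
have t14 : 14 <= t by nra.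
have tp : 0 < t by lra.
have et : expR (ln t) = t by rewrite lnK // posrE.
have lt1 : ln t <= t - 1 by have := expR_ge1Dx (ln t); rewrite et; lra.
have LL : L = 2 * ln t by rewrite /L -ht lnXn // mulr_natl.
have u0 : 0 < D^-1 by rewrite invr_gt0.
have uD : D^-1 * D = 1 by rewrite mulVf //; apply/eqP; lra.
have uS : D^-1 <= 1 / 200.
  by rewrite -(ler_pM2r D0) uD; lra.
have L1 : 1 - D^-1 <= L.
  have := expR_ge1Dx (- L); rewrite expRN eL; lra.
have Lge0 : 0 <= L by lra.
have s1 : 1 <= s.
  have h : 1 <= s ^+ 2 by rewrite hs; lra.
  rewrite expr2 in h; nra.
have st : s < t by nra.
have x0 : 0 < x by rewrite hx divr_gt0 //; lra.
have x1 : x < 1 by rewrite hx ltr_pdivrMr // mul1r.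
split => //.
have xx : x ^+ 2 = 68 / 10 * L * D^-1.
  by rewrite hx expr_div_n hs ht /L; field; apply/eqP; lra.
have hE : (1 - x ^+ 2) ^+ a <= D^-1 ^+ 3.
  have h1 : (1 - x ^+ 2) ^+ a <= expR (- x ^+ 2) ^+ a.
    apply: lerXn2r; rewrite ?nnegrE; [nra | exact: ltW (expR_gt0 _) |].
    by have := expR_ge1Dx (- x ^+ 2); lra.
  apply: le_trans h1 _; rewrite -expRM_natr.
  have h2 : - x ^+ 2 * a%:R <= - (L * 3%:R).
    rewrite xx; set A := (a%:R : R).
    have : 3 * D <= 68 / 10 * A by lra.
    move=> H; nra.
  rewrite -ler_expR in h2; apply: le_trans h2 _.
  by rewrite expRN expRM_natr eL exprVn.
have E0 : 0 <= (1 - x ^+ 2) ^+ a by apply: exprn_ge0; nra.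
rewrite ler_pdivrMr; last by lra.
have -> : 16 / 100 / t * (2 * x) = 32 / 100 * s * D^-1.
  by rewrite hx -ht; field; apply/eqP; lra.
have hx2 : (1 + x) ^+ 2 <= 4 by nra.
set u := D^-1; set E := (1 - x ^+ 2) ^+ a.
have : (1 + x) ^+ 2 * E <= 4 * u ^+ 3.
  apply: le_trans (_ : 4 * E <= _); first by apply: ler_wpM2r.
  by apply: ler_wpM2l.
move=> H; apply: le_trans H _.
have : u ^+ 3 = u * u * u by rewrite !exprS expr0 mulr1 mulrA.
move=> ->.
have H2 : 4 * (u * u) <= 32 / 100 * s by rewrite /u; nra.
have := ler_wpM2r (ltW u0) H2.
by rewrite -!mulrA.
Qed.

End Anal.

Lemma sum_const_card (R : realType) (V : finType) (c : R) :
  \sum_(v : V) c = #|V|%:R * c.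
Proof. rewrite sumr_const mulr_natl; reflexivity. Qed.

Theorem corollary1 (R : realType) (V : finType) (e : rel V) (delta : nat) :
  simple_graph e ->
  (exists v : V, deg e v = delta) ->
  (forall v : V, (delta <= deg e v)%N) ->
  (24000 <= delta)%N ->
  (gamma_s e)%:~R <=
    (Num.sqrt ((68 / 10) * ln (delta.+1%:R : R)) + 32 / 100)
      / Num.sqrt (delta.+1%:R) * (#|V|%:R).
Proof.
move=> He _ Hdeg Hd.
set D : R := delta.+1%:R.
set s := Num.sqrt (68 / 10 * ln D).
set t := Num.sqrt D.
have Hd' : (199 <= delta)%N by apply: leq_trans Hd.
have hD : 200 <= D.
  by rewrite /D (_ : 200 = 200%:R :> R) // ler_nat ltnS.
have Lge0 : 0 <= ln D by apply: ln_ge0; lra.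
have hs : s ^+ 2 = 68 / 10 * ln D by rewrite sqr_sqrtr //; lra.
have ht : t ^+ 2 = D by rewrite sqr_sqrtr //; lra.
have s0 : 0 <= s := sqrtr_ge0 _.
have t0 : 0 <= t := sqrtr_ge0 _.
set x := s / t.
have hA : forall a : nat, (delta <= 2 * a + 1)%N ->
   [/\ 0 < x, x < 1 &
   (1 + x) ^+ 2 * (1 - x ^+ 2) ^+ a / (2 * x) <= 16 / 100 / t].
  move=> a ha; apply: (vertex_bound R D s t x a hD hs s0 ht t0 erefl).
  have : (delta.+1 <= 2 * a + 2)%N by lia.
  rewrite -(ler_nat R) natrD natrM -/D; lra.
have [x0 x1 _] := hA (delta./2) ltac:(have := odd_double_half delta; rewrite -mul2n; case: (odd delta) => /= ?; lia).
set p := (1 - x) / 2.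
set q := (1 + x) / (1 - x).
have hp : 0 <= p <= 1 by apply/andP; split; rewrite /p; lra.
have hq : 1 < q by rewrite /q ltr_pdivlMr; lra.
apply: le_trans (gamma_bound He hp hq) _.
have -> : 1 - 2 * p = x by rewrite /p; field.
have HT : \sum_v ((1 - p + p * q) ^+ (deg e v).+1 / ((q - 1) * q ^+ (deg e v)./2))
    <= \sum_(v : V) (16 / 100 / t).
  apply: ler_sum => v _.
  have [_ _ H] := hA (deg e v)./2 ltac:(have := Hdeg v; have := odd_double_half (deg e v); rewrite -mul2n; case: (odd (deg e v)) => /= ? ?; lia).
  apply: le_trans H; apply: tail => //; apply/andP; split => //.
rewrite sum_const_card in HT.
have tp : 0 < t by rewrite /t sqrtr_gt0; lra.
have -> : (s + 32 / 100) / t * #|V|%:R = #|V|%:R * x + 2 * (#|V|%:R * (16 / 100 / t)).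
  by rewrite /x; field; apply/eqP; lra.
lra.
Qed.
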